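(* Let $y_1,\dots,y_l\in\mathbf{Y}$ be a training set, let $y'\in\mathbf{Y}$ be a postulated label, and let $\tau\in[0,1]$. Then the leave-one-out cross-conformal p-value equals the full conformal p-value. Equivalently, with $K=l$ folds, the quantities $A^{\mathrm{CCP}},B^{\mathrm{CCP}}$ coincide with $A^{\mathrm{CP}},B^{\mathrm{CP}}$, and hence $A^{\mathrm{CCP}}+\tau B^{\mathrm{CCP}}=A^{\mathrm{CP}}+\tau B^{\mathrm{CP}}$.
   Context: Setting: $\mathbf{Y}$ is a finite label set, the training set is $y_1,\dots,y_l\in\mathbf{Y}$, and $n_u$ denotes the number of $i$ with $y_i=u$. Full conformal p-value for the postulated label $y'$: $p^{\mathrm{CP}}_{y'}=A^{\mathrm{CP}}+\tau B^{\mathrm{CP}}$, where \[ A^{\mathrm{CP}}:=\frac{\sum_{u\in\mathbf{Y}\setminus\{y'\}:\,n_u<n_{y'}+1}n_u}{l+1},\qquad B^{\mathrm{CP}}:=\frac{\sum_{u:\,n_u=n_{y'}+1}n_u+n_{y'}+1}{l+1}. \] Leave-one-out cross-conformal p-value (number of folds $K=l$, with fold $k$ consisting of the single observation $y_k$): for $k=1,\dots,l$ and $u\in\mathbf{Y}$, let $n_{k,u}$ be the number of $i\ne k$ with $y_i=u$, and let $n'_{k,u}:=1$ if $y_k=u$ and $0$ otherwise. Set \[ A_k:=\sum_{u:\,n_{k,u}<n_{k,y'}}n'_{k,u},\qquad B_k:=\sum_{u:\,n_{k,u}=n_{k,y'}}n'_{k,u}, \] and \[ A^{\mathrm{CCP}}:=\frac{\sum_{k=1}^lA_k}{l+1},\qquad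 B^{\mathrm{CCP}}:=\frac{\sum_{k=1}^lB_k+1}{l+1}. \] The leave-one-out cross-conformal p-value is $p^{\mathrm{CCP}}_{y'}:=A^{\mathrm{CCP}}+\tau B^{\mathrm{CCP}}$. *)

(* Defs.v *)
From mathcomp Require Import all_boot all_order all_algebra.
Set Implicit Arguments. Unset Strict Implicit. Unset Printing Implicit Defensive.
Import Order.TTheory GRing.Theory Num.Theory.

Definition cnt (Y : finType) (l : nat) (y : 'I_l -> Y) (u : Y) : nat :=
  #|[set i : 'I_l | y i == u]|.

Definition cnt_k (Y : finType) (l : nat) (y : 'I_l -> Y) (k : 'I_l) (u : Y) : nat :=
  #|[set i : 'I_l | (i != k) && (y i == u)]|.

Definition cnt'_k (Y : finType) (l : nat) (y : 'I_l -> Y) (k : 'I_l) (u : Y) : nat :=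
  (y k == u : nat).

Local Open Scope ring_scope.

Section Pvals.
Variables (R : realFieldType) (Y : finType) (l : nat) (y : 'I_l -> Y) (y' : Y).

Definition A_CP : R :=
  (\sum_(u : Y | (u != y') && (cnt y u < (cnt y y').+1)%N) cnt y u)%N%:R / (l.+1)%:R.

Definition B_CP : R :=
  ((\sum_(u : Y | cnt y u == (cnt y y').+1) cnt y u) + cnt y y' + 1)%N%:R / (l.+1)%:R.

Definition p_CP (tau : R) : R := A_CP + tau * B_CP.

Definition A_k (k : 'I_l) : nat :=
  (\sum_(u : Y | (cnt_k y k u < cnt_k y k y')%N) cnt'_k y k u)%N.

Definition B_k (k : 'I_l) : nat :=
  (\sum_(u : Y | cnt_k y k u == cnt_k y k y') cnt'_k y k u)%N.

Definition A_CCP : R := (\sum_(k < l) A_k k)%N%:R / (l.+1)%:R.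

Definition B_CCP : R := ((\sum_(k < l) B_k k) + 1)%N%:R / (l.+1)%:R.

Definition p_CCP (tau : R) : R := A_CCP + tau * B_CCP.

End Pvals.

(* Main.v *)
Require Import Defs.
From mathcomp Require Import all_boot all_order all_algebra.
From mathcomp Require Import zify.
Import Order.TTheory GRing.Theory Num.Theory.

Lemma cnt_kE (Y : finType) (l : nat) (y : 'I_l -> Y) (k : 'I_l) (u : Y) :
  cnt_k y k u = (cnt y u - (y k == u))%N.
Proof.
rewrite /cnt_k /cnt.
have [e|ne] := eqVneq (y k) u.
  rewrite [#|[set i | y i == u]|](cardsD1 k) inE e eqxx /= add1n subn1 /=.
  by apply: eq_card => i; rewrite !inE.
rewrite subn0; apply: eq_card => i; rewrite !inE.
by case: eqP => // ->; rewrite (negbTE ne) andbF.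
Qed.

Lemma cnt_pos (Y : finType) (l : nat) (y : 'I_l -> Y) (k : 'I_l) :
  (0 < cnt y (y k))%N.
Proof. by rewrite /cnt card_gt0; apply/set0Pn; exists k; rewrite inE. Qed.

Lemma sum_ind (Y : finType) (v : Y) (P : pred Y) :
  (\sum_(u | P u) (v == u : nat))%N = P v.
Proof.
rewrite big_mkcond (bigD1 v) //= big1 ?addn0; first by rewrite eqxx; case: (P v).
by move=> u nu; rewrite eq_sym (negbTE nu); case: (P u).
Qed.

Lemma sum_group (Y : finType) (l : nat) (y : 'I_l -> Y) (g : Y -> nat) :
  (\sum_(k < l) g (y k))%N = (\sum_(u : Y) g u * cnt y u)%N.
Proof.
rewrite (partition_big y predT) //=; apply: eq_bigr => u _.
rewrite (eq_bigr (fun _ => g u)); last by move=> i /eqP ->.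
by rewrite sum_nat_const mulnC /cnt cardsE.
Qed.

Local Open Scope ring_scope.

Theorem proposition5 (R : realFieldType) (Y : finType) (l : nat)
    (y : 'I_l -> Y) (y' : Y) (tau : R) (htau : 0 <= tau <= 1) :
  [/\ A_CCP R y y' = A_CP R y y',
      B_CCP R y y' = B_CP R y y'
    & p_CCP y y' tau = p_CP y y' tau].
Proof.
have HA : A_CCP R y y' = A_CP R y y'.
  rewrite /A_CCP /A_CP; congr (_%:R / _).
  rewrite (eq_bigr (fun k => ((y k != y') && (cnt y (y k) < (cnt y y').+1))%N : nat)).
    rewrite (@sum_group _ _ y (fun v => nat_of_bool ((v != y') && (cnt y v < (cnt y y').+1))%N)) [RHS]big_mkcond /=; apply: eq_bigr => u _.
    by case: ifP => _; rewrite ?mul1n ?mul0n.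
  move=> k _; rewrite /A_k sum_ind !cnt_kE.
  have := @cnt_pos _ _ y k.
  have [->|ne] := eqVneq (y k) y'; first by rewrite eqxx ltnn.
  rewrite eqxx /= => h; congr nat_of_bool; apply/idP/idP; lia.
have HB : B_CCP R y y' = B_CP R y y'.
  rewrite /B_CCP /B_CP; congr ((_ + 1)%N%:R / _).
  rewrite (eq_bigr (fun k => ((y k == y') || (cnt y (y k) == (cnt y y').+1))%N : nat)).
    rewrite (@sum_group _ _ y (fun v => nat_of_bool ((v == y') || (cnt y v == (cnt y y').+1))%N)) [X in (_ = X + _)%N]big_mkcond /=.
    rewrite (bigD1 y') //= (bigD1 y' (P := predT)) //= eqxx mul1n /=.
    rewrite ltn_eqF // add0n addnC; congr (_ + _)%N.
    apply: eq_bigr => u nu; rewrite (negbTE nu) /=.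
    by case: ifP => _; rewrite ?mul1n ?mul0n.
  move=> k _; rewrite /B_k sum_ind !cnt_kE.
  have := @cnt_pos _ _ y k.
  have [->|ne] := eqVneq (y k) y'; first by rewrite !eqxx.
  rewrite eqxx /= => h; congr nat_of_bool; apply/eqP/eqP => ?; lia.
by split => //; rewrite /p_CCP /p_CP HA HB.
Qed.
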